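(* Let $G$ be a group with finite generating set $\mathcal G$, and suppose that the Cayley graph of $G$ with respect to $\mathcal G$ has property $L_\delta$ for some $\delta\ge 0$. Then $G$ is almost convex with respect to $\mathcal G$ with constant $3\delta+2$: for every integer $n\ge 0$ and every two vertices $g,g'$ of the Cayley graph with $d(1,g)=d(1,g')=n$ and $d(g,g')\le 2$, there is a path in the Cayley graph from $g$ to $g'$ of length at most $3\delta+2$ that lies entirely in the closed ball of radius $n$ about the identity vertex $1$.
   Context: The Cayley graph of $G$ with respect to $\mathcal G$ is regarded as a geodesic metric space in which each edge is isometric to the unit interval; points of this space may lie in the interiors of edges, and $d$ denotes the resulting path metric (extending the word metric on vertices). The closed ball of radius $n$ is the set of points at distance at most $n$ from the identity vertex. For $\delta\ge 0$, a finite sequence of points $(x_1,\dots,x_n)$ is a $\delta$-path if $d(x_1,x_2)+\dots+d(x_{n-1},x_n)\le d(x_1,x_n)+\delta$. The space has property $L_\delta$ if for every three distinct points $x,y,z$ there exists a point $t$ such that $(x,t,y)$, $(y,t,z)$ and $(z,t,x)$ are all $\delta$-paths. *)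

(* Defs.v *)
From Stdlib Require Import Reals List ClassicalEpsilon.
Open Scope R_scope.
Set Implicit Arguments.

Record Group := {
  carrier :> Type;
  gmul : carrier -> carrier -> carrier;
  ginv : carrier -> carrier;
  gone : carrier;
  gmulA : forall x y z, gmul x (gmul y z) = gmul (gmul x y) z;
  gmul1 : forall x, gmul gone x = x;
  gmulV : forall x, gmul (ginv x) x = gone
}.

Section Cayley.
Variables (G : Group) (gens : list G).

(* gens generates G as a group (finite since it is a list). *)
Definition generates : Prop :=
  forall g : G, exists w : list G,
    (forall s, In s w -> In s gens \/ In (ginv G s) gens) /\
    g = fold_right (gmul G) (gone G) w.

Definition adj (a b : G) : Prop :=
  a <> b /\ (In (gmul G (ginv G a) b) gens \/ In (ginv G (gmul G (ginv G a) b)) gens).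

Inductive reach : nat -> G -> G -> Prop :=
| reach0 : forall a, reach 0 a a
| reachS : forall n a b c, adj a b -> reach n b c -> reach (S n) a c.

Definition vdist (a b : G) : nat :=
  epsilon (inhabits 0%nat)
    (fun n => reach n a b /\ forall m, reach m a b -> (n <= m)%nat).

(* Points of the metric Cayley graph: Pt a b t is the point at distance t
   from a on the edge [a,b]; vertices are Pt a a 0. *)
Record point := Pt { pa : G; pb : G; pt : R }.

Definition valid (p : point) : Prop :=
  0 <= pt p <= 1 /\ ((pa p = pb p /\ pt p = 0) \/ adj (pa p) (pb p)).

Definition vertex (g : G) : point := Pt g g 0.

Definition via_ends (p q : point) : R :=
  Rmin (Rmin (pt p + INR (vdist (pa p) (pa q)) + pt q)
             (pt p + INR (vdist (pa p) (pb q)) + (1 - pt q)))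
       (Rmin ((1 - pt p) + INR (vdist (pb p) (pa q)) + pt q)
             ((1 - pt p) + INR (vdist (pb p) (pb q)) + (1 - pt q))).

(* Path metric of the Cayley graph with unit-length edges. *)
Definition pdist (p q : point) : R :=
  if excluded_middle_informative (pa p = pa q /\ pb p = pb q)
  then Rmin (Rabs (pt p - pt q)) (via_ends p q)
  else if excluded_middle_informative (pa p = pb q /\ pb p = pa q)
  then Rmin (Rabs (pt p - (1 - pt q))) (via_ends p q)
  else via_ends p q.

Fixpoint path_len (l : list point) : R :=
  match l with
  | x :: ((y :: _) as t) => pdist x y + path_len t
  | _ => 0
  end.

Definition delta_path (delta : R) (l : list point) : Prop :=
  match l with
  | nil => True
  | x :: _ => path_len l <= pdist x (last l x) + delta
  end.

(* Property L_delta; "distinct points" = points at positive distance. *)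
Definition has_L (delta : R) : Prop :=
  forall x y z : point, valid x -> valid y -> valid z ->
    pdist x y <> 0 -> pdist y z <> 0 -> pdist z x <> 0 ->
    exists t : point, valid t /\
      delta_path delta (x :: t :: y :: nil) /\
      delta_path delta (y :: t :: z :: nil) /\
      delta_path delta (z :: t :: x :: nil).

Definition in_ball (n : nat) (p : point) : Prop :=
  pdist (vertex (gone G)) p <= INR n.

Fixpoint edge_path (l : list G) : Prop :=
  match l with
  | a :: ((b :: _) as t) => adj a b /\ edge_path t
  | _ => True
  end.

Fixpoint edges_in_ball (n : nat) (l : list G) : Prop :=
  match l with
  | a :: ((b :: _) as t) =>
      (forall s, 0 <= s <= 1 -> in_ball n (Pt a b s)) /\ edges_in_ball n t
  | _ => True
  end.

End Cayley.
Arguments generates {G}.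
Arguments has_L {G}.
Arguments pdist {G}.
Arguments edge_path {G}.
Arguments edges_in_ball {G}.

(* Main.v *)
Require Import Defs.
From Stdlib Require Import Reals List Lra Lia Classical ClassicalEpsilon ZArith.
Open Scope R_scope.

Section S.
Variable G : Group.
Variable gens : list G.

Notation mul := (gmul G).
Notation inv := (ginv G).
Notation one := (gone G).

Lemma mulV x : mul x (inv x) = one.
Proof.
  set (y := inv x).
  transitivity (mul (mul (inv y) y) (mul x y)).
  { rewrite gmulV, gmul1; reflexivity. }
  rewrite <- gmulA. rewrite (gmulA G y x y). unfold y at 2. rewrite gmulV, gmul1.
  apply gmulV.
Qed.

Lemma mul1r x : mul x one = x.
Proof. rewrite <- (gmulV G x), gmulA, mulV, gmul1. reflexivity. Qed.

Lemma invK x : inv (inv x) = x.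
Proof.
  rewrite <- (mul1r (inv (inv x))), <- (gmulV G x), gmulA, gmulV, gmul1. reflexivity.
Qed.

Lemma inv_uniq a b : mul a b = one -> a = inv b.
Proof.
  intro H. rewrite <- (mul1r a), <- (mulV b), gmulA, H, gmul1. reflexivity.
Qed.

Lemma invM x y : inv (mul x y) = mul (inv y) (inv x).
Proof.
  symmetry. apply inv_uniq.
  rewrite <- gmulA, (gmulA G (inv x) x y), gmulV, gmul1, gmulV. reflexivity.
Qed.
End S.

Lemma nat_min (P : nat -> Prop) : (exists n, P n) -> exists n, P n /\ forall m, P m -> (n <= m)%nat.
Proof.
  intros [n Hn]. induction n as [n IH] using (well_founded_induction Wf_nat.lt_wf).
  destruct (classic (exists m, (m < n)%nat /\ P m)) as [[m [Hm Pm]]|Hno].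
  - exact (IH m Hm Pm).
  - exists n. split; auto. intros m Pm. destruct (Nat.le_gt_cases n m); auto.
    exfalso; apply Hno; eauto.
Qed.

Section S2.
Variable G : Group.
Variable gens : list G.
Hypothesis Hgen : generates gens.

Notation mul := (gmul G).
Notation inv := (ginv G).
Notation one := (gone G).
Notation d := (vdist G gens).
Notation adjg := (adj G gens).
Notation reachg := (reach G gens).

Lemma adj_sym a b : adjg a b -> adjg b a.
Proof.
  intros [Hne H]. split; [congruence|].
  assert (E : mul (inv b) a = inv (mul (inv a) b)) by (rewrite invM, invK; reflexivity).
  rewrite E, invK. tauto.
Qed.

Lemma reach_trans n m a b c : reachg n a b -> reachg m b c -> reachg (n+m) a c.
Proof. induction 1; simpl; auto. intros. econstructor; eauto. Qed.

Lemma reach_snoc n a b c : reachg n a b -> adjg b c -> reachg (S n) a c.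
Proof. intros H1 H2. replace (S n) with (n+1)%nat by lia. eapply reach_trans; eauto.
  econstructor; eauto. constructor. Qed.

Lemma reach_sym n a b : reachg n a b -> reachg n b a.
Proof. induction 1. constructor. eapply reach_snoc; eauto. apply adj_sym; auto. Qed.

Lemma reach_word a (w : list G) :
  (forall s, In s w -> In s gens \/ In (inv s) gens) ->
  exists n, reachg n a (mul a (fold_right mul one w)).
Proof.
  revert a; induction w as [|s w IH]; intros a Hw; simpl.
  - exists 0%nat. rewrite mul1r. constructor.
  - destruct (IH (mul a s)) as [n Hn]. { intros; apply Hw; simpl; auto. }
    rewrite gmulA.
    destruct (classic (mul a s = a)) as [E|E].
    + exists n. rewrite E in Hn |- *. exact Hn.
    + exists (S n). econstructor; [|exact Hn]. split; [congruence|].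
      rewrite gmulA, gmulV, gmul1. apply Hw; simpl; auto.
Qed.

Lemma reach_ex a b : exists n, reachg n a b.
Proof.
  destruct (Hgen (mul (inv a) b)) as [w [Hw E]].
  destruct (reach_word a w Hw) as [n Hn]. exists n.
  rewrite <- E, gmulA, mulV, gmul1 in Hn. exact Hn.
Qed.

Lemma vdist_spec a b : reachg (d a b) a b /\ forall m, reachg m a b -> (d a b <= m)%nat.
Proof.
  unfold vdist. apply epsilon_spec. apply nat_min. apply reach_ex.
Qed.

Lemma d_reach a b : reachg (d a b) a b.
Proof. apply vdist_spec. Qed.

Lemma d_le m a b : reachg m a b -> (d a b <= m)%nat.
Proof. apply vdist_spec. Qed.

Lemma d_refl a : d a a = 0%nat.
Proof. assert (H := d_le 0 a a (reach0 _ _ a)). lia. Qed.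

Lemma d_tri a b c : (d a c <= d a b + d b c)%nat.
Proof. apply d_le. apply reach_trans with b; apply d_reach. Qed.

Lemma d_sym a b : d a b = d b a.
Proof.
  apply Nat.le_antisymm; apply d_le; apply reach_sym; apply d_reach.
Qed.

Lemma d_adj a b : adjg a b -> (d a b <= 1)%nat.
Proof. intro H. apply d_le. econstructor; eauto. constructor. Qed.

Lemma d_zero a b : d a b = 0%nat -> a = b.
Proof. intro H. assert (R := d_reach a b). rewrite H in R. inversion R; auto. Qed.

Lemma d_pos a b : a <> b -> (1 <= d a b)%nat.
Proof. intro H. destruct (d a b) eqn:E; [|lia]. apply d_zero in E; tauto. Qed.

Lemma parent p : (1 <= d one p)%nat -> exists q, adjg p q /\ (d one q + 1 = d one p)%nat.
Proof.
  intro H. assert (R := d_reach p one). rewrite d_sym in H.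
  destruct (d p one) as [|k] eqn:E; [lia|].
  inversion R as [|k' a' b c Hab Hbc]; subst. exists b. split; auto.
  assert (H1 := d_le _ _ _ Hbc). assert (H2 := d_tri p b one).
  assert (H4 := d_adj _ _ Hab). rewrite (d_sym one b), (d_sym one p), E. lia.
Qed.

Notation nd x := (d one x).

Inductive gp (n : nat) : G -> G -> nat -> Prop :=
| gp0 a : gp n a a 0
| gpS a b c k : adjg a b -> (nd a + nd b + 1 <= 2 * n)%nat -> gp n b c k -> gp n a c (S k).

Lemma gp_trans n a b c k l : gp n a b k -> gp n b c l -> gp n a c (k + l).
Proof. induction 1; simpl; auto. intros; econstructor; eauto. Qed.

Lemma gp_snoc n a b c k : gp n a b k -> adjg b c -> (nd b + nd c + 1 <= 2 * n)%nat -> gp n a c (S k).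
Proof. intros. replace (S k) with (k + 1)%nat by lia. eapply gp_trans; eauto.
  econstructor; eauto. constructor. Qed.

Lemma gp_sym n a b k : gp n a b k -> gp n b a k.
Proof. induction 1. constructor. eapply gp_snoc; eauto. apply adj_sym; auto. lia. Qed.

Lemma gp_reach n a b k : gp n a b k -> reachg k a b.
Proof. induction 1; econstructor; eauto. Qed.

Lemma geo n j : forall r f e r0, reachg r f e ->
  (nd f + j <= n + r0)%nat -> (nd e + r + r0 <= n + j)%nat -> gp n f e r.
Proof.
  intros r f e r0 H. revert r0. induction H as [a|r a b c Hab Hbc IH]; intros r0 H1 H2.
  - constructor.
  - assert (T1 := d_tri one a b). assert (T2 := d_adj _ _ Hab).
    assert (T3 := d_tri one b c). assert (T4 := d_le _ _ _ Hbc).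
    assert (T5 := d_tri one a c). assert (T6 := d_le _ _ _ (reachS Hab Hbc)).
    assert (T7 := d_sym c b). assert (T8 := d_sym c a).
    assert (T9 := d_tri one c b). assert (T10 := d_tri one c a).
    assert (T11 := d_tri one b a). rewrite (d_sym b a) in T11.
    econstructor; eauto.
    + lia.
    + apply (IH (S r0)); lia.
Qed.

Lemma descend g n : nd g = n -> forall j, (j <= n)%nat -> exists p, (nd p + j = n)%nat /\ gp n g p j.
Proof.
  intros Hg j. induction j as [|j IH]; intro Hj.
  - exists g. split; [lia|constructor].
  - destruct IH as [p [Hp Gp]]; [lia|].
    destruct (parent p) as [q [Hpq Hq]]; [lia|].
    exists q. split; [lia|]. eapply gp_snoc; eauto. lia.
Qed.

Ltac demi := match goal with |- context [excluded_middle_informative ?P] => destruct (excluded_middle_informative P) end.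
Tactic Notation "demi" "as" simple_intropattern(p) := match goal with |- context [excluded_middle_informative ?P] => destruct (excluded_middle_informative P) as p end.

Ltac rmin := unfold Rmin in *; repeat match goal with
  | |- context [Rle_dec ?a ?b] => destruct (Rle_dec a b)
  | H : context [Rle_dec ?a ?b] |- _ => destruct (Rle_dec a b)
  end.

Lemma INR_d_nonneg a b : 0 <= INR (d a b).
Proof. apply pos_INR. Qed.

Lemma pdist_vv a b : pdist gens (vertex G a) (vertex G b) = INR (d a b).
Proof.
  unfold pdist, via_ends, vertex; simpl.
  demi as [[E _]|N].
  - subst. rewrite d_refl. simpl. rewrite Rminus_0_r, Rabs_R0. rmin; lra.
  - assert (H:=INR_d_nonneg a b). rmin; lra.
Qed.

Lemma valid_inv x y t : valid gens (Pt G x y t) -> 0 <= t <= 1 /\ ((x = y /\ t = 0) \/ adjg x y).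
Proof. unfold valid; simpl; auto. Qed.

Lemma valid_d x y t : valid gens (Pt G x y t) -> (d x y <= 1)%nat.
Proof.
  intro V. apply valid_inv in V. destruct V as [_ [[E _]|A]].
  - subst. rewrite d_refl. lia.
  - apply d_adj; auto.
Qed.

Lemma pdist_vp w x y t : valid gens (Pt G x y t) ->
  pdist gens (vertex G w) (Pt G x y t) = Rmin (INR (d w x) + t) (INR (d w y) + (1 - t)).
Proof.
  intro V. apply valid_inv in V. destruct V as [Ht Hxy].
  unfold pdist, via_ends, vertex; simpl.
  assert (H1:=INR_d_nonneg w x). assert (H2:=INR_d_nonneg w y).
  demi as [[E1 E2]|N].
  - subst. destruct Hxy as [[_ E]|[A _]]; [|tauto]. subst. rewrite d_refl. simpl.
    rewrite Rminus_0_r, Rabs_R0. rmin; lra.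
  - demi as [[E1 E2]|N2].
    + subst. destruct Hxy as [[_ E]|[A _]]; [|tauto]. subst. tauto.
    + rmin; lra.
Qed.

Lemma pdist_le_via p q : pdist gens p q <= via_ends gens p q.
Proof.
  unfold pdist. demi; [apply Rmin_r|].
  demi; [apply Rmin_r|]. lra.
Qed.

Lemma via_sym p q : via_ends gens p q = via_ends gens q p.
Proof.
  unfold via_ends. rewrite (d_sym (pa q) (pa p)), (d_sym (pa q) (pb p)),
    (d_sym (pb q) (pa p)), (d_sym (pb q) (pb p)). rmin; lra.
Qed.

Lemma pdist_sym p q : pdist gens p q = pdist gens q p.
Proof.
  unfold pdist. rewrite via_sym.
  destruct p as [a b s], q as [a' b' s']; simpl.
  repeat demi; try solve [exfalso; repeat match goal with H: _ /\ _ |- _ => destruct H end; subst; tauto].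
  - rewrite Rabs_minus_sym. reflexivity.
  - replace (s - (1 - s')) with (s' - (1 - s)) by ring. reflexivity.
  - reflexivity.
Qed.

Lemma in_ball_edge n a b s : adjg a b -> (nd a + nd b + 1 <= 2 * n)%nat -> 0 <= s <= 1 ->
  in_ball gens n (Pt G a b s).
Proof.
  intros A H Hs. unfold in_ball.
  assert (V : valid gens (Pt G a b s)) by (unfold valid; simpl; tauto).
  rewrite pdist_vp by exact V.
  apply le_INR in H. rewrite !plus_INR, mult_INR in H. simpl in H.
  rmin; lra.
Qed.

Lemma last_cons_def (l : list G) x a b : last (x :: l) a = last (x :: l) b.
Proof. revert x; induction l as [|y l IH]; intros; simpl; auto. destruct l; auto. apply (IH y). Qed.

Lemma gp_list n a b k : gp n a b k -> exists l, edge_path gens (a :: l) /\ last (a :: l) a = b /\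
  length l = k /\ edges_in_ball gens n (a :: l).
Proof.
  induction 1 as [a|a b c k A H G' IH].
  - exists nil. simpl. tauto.
  - destruct IH as [l [E1 [E2 [E3 E4]]]]. exists (b :: l).
    split; [simpl; auto|]. split; [change (last (b :: l) a = c); rewrite (last_cons_def l b a b); auto|].
    split; [simpl; auto|]. simpl. split; auto.
    intros s Hs. apply in_ball_edge; auto.
Qed.

Lemma valid_levels x y t : valid gens (Pt G x y t) -> (nd x <= nd y + 1 /\ nd y <= nd x + 1)%nat.
Proof.
  intro V. assert (H := valid_d x y t V). assert (H1 := d_tri one x y). assert (H2 := d_tri one y x).
  rewrite (d_sym y x) in H2. lia.
Qed.

Lemma e_bound x y t e c : valid gens (Pt G x y t) -> ((e = x /\ c = t) \/ (e = y /\ c = 1 - t)) ->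
  INR (nd e) <= pdist gens (vertex G one) (Pt G x y t) + c.
Proof.
  intros V Hec. rewrite pdist_vp by exact V.
  destruct (valid_levels _ _ _ V) as [L1 L2]. apply le_INR in L1. apply le_INR in L2.
  rewrite plus_INR in L1, L2. simpl in L1, L2.
  destruct (valid_inv _ _ _ V) as [Ht _].
  destruct Hec as [[-> ->]|[-> ->]]; rmin; lra.
Qed.

Section Half.
Variables (n j : nat) (th dl : R) (g p q x y : G) (tau : R).
Hypotheses (Rp : gp n g p j) (Rq : gp n g q (S j))
  (Lp : (nd p + j = n)%nat) (Lq : (nd q + j + 1 = n)%nat) (Apq : adjg p q)
  (Hth : 0 <= th <= 1/2) (Hdl : dl < 2 * INR j + 2 * th + 1)
  (Vt : valid gens (Pt G x y tau)).

Definition Aout (D : R) := exists e c len, ((e = x /\ c = tau) \/ (e = y /\ c = 1 - tau)) /\ gp n g e len /\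
      INR len <= INR j + th + D - c /\
      (INR (nd e) <= INR n - (INR j + th) + D - c \/ (nd x + nd y + 1 <= 2 * n)%nat).

Lemma half_gen D f cf lenf e c : gp n g f lenf ->
  ((f = p /\ cf = th /\ lenf = j /\ (nd f + j = n)%nat) \/ (f = q /\ cf = 1 - th /\ lenf = S j /\ (nd f + j + 1 = n)%nat)) ->
  ((e = x /\ c = tau) \/ (e = y /\ c = 1 - tau)) ->
  cf + INR (d f e) + c <= D ->
  pdist gens (vertex G one) (Pt G x y tau) + D <= INR n - (INR j + th) + dl ->
  Aout D.
Proof.
  intros Rf Hf Hec HD H3.
  assert (EB := e_bound _ _ _ _ _ Vt Hec).
  assert (Tf := d_tri one f e).
  assert (Ht := proj1 (valid_inv _ _ _ Vt)).
  assert (Hc : 0 <= c <= 1) by (destruct Hec as [[_ ->]|[_ ->]]; lra).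
  assert (Hj := pos_INR j).
  assert (Hgeo : (nd e + d f e <= n + j)%nat).
  { assert (Hl : INR (nd e + d f e) < INR (n + j + 1)).
    { rewrite !plus_INR. simpl.
      destruct Hf as [[-> [-> [-> Hn]]]|[-> [-> [-> Hn]]]];
        [apply (f_equal INR) in Hn; rewrite plus_INR in Hn|
         apply (f_equal INR) in Hn; rewrite !plus_INR in Hn; simpl in Hn]; lra. }
    apply INR_lt in Hl. lia. }
  exists e, c, (lenf + d f e)%nat. split; [exact Hec|]. split.
  - apply gp_trans with f; [exact Rf|].
    apply (geo n j (d f e) f e 0 (d_reach f e)).
    + destruct Hf as [[_ [_ [_ Hn]]]|[_ [_ [_ Hn]]]]; lia.
    + lia.
  - apply le_INR in Tf. rewrite plus_INR in Tf.
    rewrite plus_INR.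
    destruct Hf as [[-> [-> [-> Hn]]]|[-> [-> [-> Hn]]]];
    apply (f_equal INR) in Hn; rewrite !plus_INR in Hn; simpl in Hn; rewrite ?S_INR; (split; [lra|left; lra]).
Qed.
End Half.

Lemma pdist_cases P Q : pdist gens P Q = via_ends gens P Q \/
  (pa P = pa Q /\ pb P = pb Q /\ pdist gens P Q = Rabs (pt P - pt Q)) \/
  (pa P = pb Q /\ pb P = pa Q /\ pdist gens P Q = Rabs (pt P - (1 - pt Q))).
Proof.
  unfold pdist. demi as [C|C].
  - unfold Rmin. destruct (Rle_dec _ _); [right; left; tauto|left; auto].
  - demi as [C2|C2]; [|left; auto]. unfold Rmin. destruct (Rle_dec _ _); [right; right; tauto|left; auto].
Qed.

Section Half2.
Variables (n j : nat) (th dl : R) (g p q x y : G) (tau : R).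
Hypotheses (Rp : gp n g p j) (Rq : gp n g q (S j))
  (Lp : (nd p + j = n)%nat) (Lq : (nd q + j + 1 = n)%nat) (Apq : adjg p q)
  (Hth : 0 <= th <= 1/2) (Hdl : dl < 2 * INR j + 2 * th + 1)
  (Vt : valid gens (Pt G x y tau)).

Definition Bout (D : R) := ((x = p /\ y = q) \/ (x = q /\ y = p)) /\
  forall e c, ((e = x /\ c = tau) \/ (e = y /\ c = 1 - tau)) -> exists len, gp n g e len /\ INR len <= INR j + th + D + c.

Lemma half_via D : via_ends gens (Pt G p q th) (Pt G x y tau) <= D ->
  pdist gens (vertex G one) (Pt G x y tau) + D <= INR n - (INR j + th) + dl ->
  Aout n j th g x y tau D.
Proof.
  intros HV H3. unfold via_ends in HV; simpl in HV.
  assert (Hd : th + INR (d p x) + tau <= D \/ th + INR (d p y) + (1 - tau) <= D \/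
               1 - th + INR (d q x) + tau <= D \/ 1 - th + INR (d q y) + (1 - tau) <= D)
    by (rmin; lra).
  destruct Hd as [Hd|[Hd|[Hd|Hd]]].
  - apply half_gen with (dl := dl) (g := g) (p := p) (q := q) (D := D) (f := p) (cf := th) (lenf := j) (e := x) (c := tau); auto.
  - apply half_gen with (dl := dl) (g := g) (p := p) (q := q) (D := D) (f := p) (cf := th) (lenf := j) (e := y) (c := 1 - tau); auto.
  - apply half_gen with (dl := dl) (g := g) (p := p) (q := q) (D := D) (f := q) (cf := 1 - th) (lenf := S j) (e := x) (c := tau); auto.
  - apply half_gen with (dl := dl) (g := g) (p := p) (q := q) (D := D) (f := q) (cf := 1 - th) (lenf := S j) (e := y) (c := 1 - tau); auto.
Qed.

Lemma half :
  pdist gens (vertex G one) (Pt G x y tau) + pdist gens (Pt G p q th) (Pt G x y tau) <= INR n - (INR j + th) + dl ->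
  Aout n j th g x y tau (pdist gens (Pt G p q th) (Pt G x y tau)) \/ Bout (pdist gens (Pt G p q th) (Pt G x y tau)).
Proof.
  intro H3.
  assert (HV := pdist_le_via (Pt G p q th) (Pt G x y tau)).
  assert (Ht := proj1 (valid_inv _ _ _ Vt)).
  assert (Hj := pos_INR j).
  assert (Lpq : (nd p + nd q + 1 <= 2 * n)%nat) by lia.
  set (D := pdist gens (Pt G p q th) (Pt G x y tau)) in *.
  destruct (pdist_cases (Pt G p q th) (Pt G x y tau)) as [E|[[E1 [E2 E]]|[E1 [E2 E]]]];
    simpl in *; fold D in E.
  - left. apply half_via; lra.
  - destruct (Rle_dec tau th).
    + left. exists p, tau, j. split; [left; auto|]. split; auto. split.
      * rewrite E, Rabs_right by lra. lra.
      * right; rewrite <- E1, <- E2; lia.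
    + right. split; [left; auto|]. intros e c [[-> ->]|[-> ->]].
      * exists j. rewrite <- E1. split; auto. rewrite E, Rabs_left1 by lra. lra.
      * exists (S j). rewrite <- E2. split; auto. rewrite E, Rabs_left1, S_INR by lra. lra.
  - destruct (Rle_dec (1 - tau) th).
    + left. exists p, (1 - tau), j. split; [right; auto|]. split; auto. split.
      * rewrite E, Rabs_right by lra. lra.
      * right; rewrite <- E1, <- E2; lia.
    + right. split; [right; auto|]. intros e c [[-> ->]|[-> ->]].
      * exists (S j). rewrite <- E2. split; auto. rewrite E, Rabs_left1, S_INR by lra. lra.
      * exists j. rewrite <- E1. split; auto. rewrite E, Rabs_left1 by lra. lra.
Qed.
End Half2.

Lemma valid_u p q th : adjg p q -> 0 <= th <= 1 -> valid gens (Pt G p q th).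
Proof. intros. unfold valid; simpl; tauto. Qed.

Lemma valid_vertex a : valid gens (vertex G a).
Proof. unfold valid, vertex; simpl. split; [lra|]. left; auto. Qed.

Lemma dist1u_le p q th k : (nd q + k + 1 = k + nd q + 1)%nat -> 0 <= th <= 1 ->
  pdist gens (vertex G one) (Pt G p q th) <= INR (nd q) + 1 - th.
Proof.
  intros _ Hth. eapply Rle_trans; [apply pdist_le_via|].
  unfold via_ends, vertex; simpl. assert (H := pos_INR (d one p)). rmin; lra.
Qed.

Lemma dist1u_pos p q th : adjg p q -> (1 <= nd q)%nat -> (nd q + 1 = nd p)%nat -> 0 <= th <= 1 ->
  pdist gens (vertex G one) (Pt G p q th) <> 0.
Proof.
  intros A Hq Hpq Hth. destruct (pdist_cases (vertex G one) (Pt G p q th)) as [E|[[E1 [E2 E]]|[E1 [E2 E]]]];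
    simpl in *.
  - rewrite E. unfold via_ends, vertex; simpl.
    assert (H1 : 1 <= INR (d one q)) by (apply (le_INR 1); lia).
    assert (H2 : 0 <= INR (d one p)) by apply pos_INR.
    assert (H3 : 1 <= INR (d one p)).
    { apply (le_INR 1). lia. }
    rmin; lra.
  - destruct A as [A _]. congruence.
  - destruct A as [A _]. congruence.
Qed.

Lemma distuu_le p q p' q' th : 0 <= th <= 1 ->
  pdist gens (Pt G p q th) (Pt G p' q' th) <= 2 * th + INR (d p p').
Proof.
  intros Hth. eapply Rle_trans; [apply pdist_le_via|].
  unfold via_ends; simpl. rmin; lra.
Qed.

Lemma distuu_pos p q p' q' th : p <> p' -> nd p = nd p' -> (nd q + 1 = nd p)%nat -> (nd q' + 1 = nd p')%nat ->
  0 <= th <= 1/2 -> pdist gens (Pt G p q th) (Pt G p' q' th) <> 0.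
Proof.
  intros N L1 L2 L3 Hth.
  destruct (pdist_cases (Pt G p q th) (Pt G p' q' th)) as [E|[[E1 [E2 E]]|[E1 [E2 E]]]]; simpl in *.
  - rewrite E. unfold via_ends; simpl.
    assert (H1 : 1 <= INR (d p p')) by (apply (le_INR 1); apply d_pos; auto).
    assert (H2 := pos_INR (d p q')). assert (H3 := pos_INR (d q p')). assert (H4 := pos_INR (d q q')).
    rmin; lra.
  - tauto.
  - subst. lia.
Qed.

Lemma mid_edge n k dl x y tau Dx Dy :
  valid gens (Pt G x y tau) ->
  dl < 2 * k + 1 ->
  (INR (nd x) <= INR n - k + Dx - tau \/ (nd x + nd y + 1 <= 2 * n)%nat) ->
  (INR (nd y) <= INR n - k + Dy - (1 - tau) \/ (nd x + nd y + 1 <= 2 * n)%nat) ->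
  pdist gens (vertex G one) (Pt G x y tau) + Dx <= INR n - k + dl ->
  pdist gens (vertex G one) (Pt G x y tau) + Dy <= INR n - k + dl ->
  (nd x + nd y + 1 <= 2 * n)%nat.
Proof.
  intros V Hk [Bx|R] [By|R'] H1 H2; auto.
  rewrite pdist_vp in H1, H2 by exact V.
  assert (Hl : INR (nd x + nd y + 1) < INR (2 * n + 1)).
  { rewrite !plus_INR, mult_INR. simpl. rmin; lra. }
  apply INR_lt in Hl. lia.
Qed.

Lemma finish n dl g g' k : gp n g g' k -> INR k <= 3 * dl + 2 ->
  exists l : list G, edge_path gens (g :: l) /\ last (g :: l) g = g' /\
      INR (length l) <= 3 * dl + 2 /\ edges_in_ball gens n (g :: l).
Proof.
  intros Hp Hk. destruct (gp_list _ _ _ _ Hp) as [l [E1 [E2 [E3 E4]]]].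
  exists l. rewrite E3. tauto.
Qed.

Lemma get_m dl : 0 <= dl -> exists m : nat, INR m <= dl < INR m + 1.
Proof.
  intro H. destruct (archimed dl) as [A1 A2].
  assert (Hz : (0 < up dl)%Z) by (apply lt_IZR; lra).
  exists (Z.to_nat (up dl - 1)).
  rewrite INR_IZR_INZ, Z2Nat.id by lia. rewrite minus_IZR. simpl. lra.
Qed.

Lemma main_sec (dl : R) : 0 <= dl -> has_L gens dl ->
  forall (n : nat) (g g' : G),
    pdist gens (vertex G one) (vertex G g) = INR n ->
    pdist gens (vertex G one) (vertex G g') = INR n ->
    pdist gens (vertex G g) (vertex G g') <= 2 ->
    exists l : list G,
      edge_path gens (g :: l) /\
      last (g :: l) g = g' /\
      INR (length l) <= 3 * dl + 2 /\
      edges_in_ball gens n (g :: l).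
Proof.
  intros Hdl HL n g g' Hg Hg' Hgg.
  rewrite pdist_vv in Hg, Hg', Hgg. apply INR_eq in Hg. apply INR_eq in Hg'.
  assert (Hgg2 : (d g g' <= 2)%nat) by (apply INR_le; simpl; lra).
  destruct (get_m dl Hdl) as [m [Hm1 Hm2]].
  set (j := (m / 2)%nat). set (b := (m mod 2)%nat).
  assert (Hmjb : m = (2 * j + b)%nat) by (apply Nat.div_mod_eq).
  assert (Hb : (b < 2)%nat) by (apply Nat.mod_upper_bound; lia).
  set (th := INR b / 2).
  assert (Hth : 0 <= th <= 1/2).
  { unfold th. assert (b = 0 \/ b = 1)%nat as [-> | ->] by lia; simpl; lra. }
  assert (Hm : INR m = 2 * INR j + 2 * th).
  { rewrite Hmjb, plus_INR, mult_INR. unfold th. simpl. lra. }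
  assert (Hj := pos_INR j).
  destruct (le_lt_dec n (S j)) as [Hsmall|Hbig].
  -
    destruct (descend g n Hg n (le_n n)) as [p [Hp Rp]].
    destruct (descend g' n Hg' n (le_n n)) as [p' [Hp' Rp']].
    assert (E1 : one = p) by (apply d_zero; lia).
    assert (E2 : one = p') by (apply d_zero; lia).
    subst p p'.
    apply (finish n dl g g' (n + n)); [apply gp_trans with one; auto; apply gp_sym; auto|].
    rewrite plus_INR. apply le_INR in Hsmall. rewrite S_INR in Hsmall. lra.
  - destruct (descend g n Hg j ltac:(lia)) as [p [Hp Rp]].
    destruct (descend g' n Hg' j ltac:(lia)) as [p' [Hp' Rp']].
    destruct (parent p ltac:(lia)) as [q [Apq Hq]].
    destruct (parent p' ltac:(lia)) as [q' [Apq' Hq']].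
    assert (Rq : gp n g q (S j)) by (eapply gp_snoc; eauto; lia).
    assert (Rq' : gp n g' q' (S j)) by (eapply gp_snoc; eauto; lia).
    assert (Lq : (nd q + j + 1 = n)%nat) by lia.
    assert (Lq' : (nd q' + j + 1 = n)%nat) by lia.
    destruct (classic (p = p')) as [Epp|Npp].
    { subst p'. apply (finish n dl g g' (j + j)); [apply gp_trans with p; auto; apply gp_sym; auto|].
      rewrite plus_INR. lra. }
    assert (Hdl2 : dl < 2 * INR j + 2 * th + 1) by lra.
    set (u := Pt G p q th). set (u' := Pt G p' q' th).
    assert (Vu : valid gens u) by (apply valid_u; auto; lra).
    assert (Vu' : valid gens u') by (apply valid_u; auto; lra).
    assert (Nuu : pdist gens u u' <> 0) by (apply distuu_pos; auto; lia).
    assert (N1u : pdist gens (vertex G one) u <> 0) by (apply dist1u_pos; auto; lia || lra).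
    assert (N1u' : pdist gens (vertex G one) u' <> 0) by (apply dist1u_pos; auto; lia || lra).
    destruct (HL u u' (vertex G one) Vu Vu' (valid_vertex one) Nuu)
      as [[x y tau] [Vt [P1 [P2 P3]]]].
    { rewrite pdist_sym; auto. }
    { auto. }
    unfold delta_path in P1, P2, P3; simpl in P1, P2, P3.
    set (t := Pt G x y tau) in *.
    rewrite (pdist_sym t u') in P1. rewrite (pdist_sym t (vertex G one)) in P2.
    rewrite (pdist_sym u' (vertex G one)) in P2. rewrite (pdist_sym t u) in P3.
    assert (B1u : pdist gens (vertex G one) u <= INR n - (INR j + th)).
    { eapply Rle_trans; [apply (dist1u_le p q th 0); lia || lra|].
      apply (f_equal INR) in Lq. rewrite !plus_INR in Lq. simpl in Lq. lra. }
    assert (B1u' : pdist gens (vertex G one) u' <= INR n - (INR j + th)).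
    { eapply Rle_trans; [apply (dist1u_le p' q' th 0); lia || lra|].
      apply (f_equal INR) in Lq'. rewrite !plus_INR in Lq'. simpl in Lq'. lra. }
    assert (Bpp : (d p p' <= 2 * j + 2)%nat).
    { assert (T1 := d_tri p g p'). assert (T2 := d_tri g g' p').
      assert (T3 := d_le _ _ _ (gp_reach _ _ _ _ Rp)). assert (T4 := d_le _ _ _ (gp_reach _ _ _ _ Rp')).
      rewrite (d_sym p g) in T1. lia. }
    assert (Buu : pdist gens u u' <= 2 * INR j + 2 * th + 2).
    { eapply Rle_trans; [apply distuu_le; lra|]. apply le_INR in Bpp.
      rewrite plus_INR, mult_INR in Bpp. simpl in Bpp. lra. }
    set (D := pdist gens u t) in *. set (D' := pdist gens u' t) in *.
    set (D1 := pdist gens (vertex G one) t) in *.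
    assert (Htau := proj1 (valid_inv _ _ _ Vt)).
    assert (Hfin : 2 * (INR j + th) + D + D' <= 3 * dl + 2) by lra.
    assert (HA : Aout n j th g x y tau D \/ Bout n j th g p q x y tau D).
    { apply (half n j th dl g p q x y tau Rp Rq Hp Lq Hth Hdl2 Vt). unfold D1, D, u, t in *; lra. }
    assert (HB : Aout n j th g' x y tau D' \/ Bout n j th g' p' q' x y tau D').
    { apply (half n j th dl g' p' q' x y tau Rp' Rq' Hp' Lq' Hth Hdl2 Vt). unfold D1, D', u', t in *; lra. }
    destruct HA as [[ea [ca [la [Hea [Ra [La Ba]]]]]]|[Ma Ba]];
    destruct HB as [[eb [cb [lb [Heb [Rb [Lb Bb]]]]]]|[Mb Bb]].
    + destruct (classic (ea = eb)) as [Eab|Nab].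
      * rewrite <- Eab in Rb. apply (finish n dl g g' (la + lb)); [apply gp_trans with ea; auto; apply gp_sym; auto|].
        rewrite plus_INR.
        assert (0 <= ca /\ 0 <= cb) by (destruct Hea as [[_ ->]|[_ ->]]; destruct Heb as [[_ ->]|[_ ->]]; lra).
        lra.
      * assert (Hxy : x <> y) by (intro Exy; rewrite Exy in Hea; destruct Hea as [[-> _]|[-> _]]; destruct Heb as [[-> _]|[-> _]]; congruence).
        assert (Axy : adjg x y) by (destruct (proj2 (valid_inv _ _ _ Vt)) as [[? _]|?]; tauto).
        assert (Exy : (nd x + nd y + 1 <= 2 * n)%nat /\ adjg ea eb /\ ca + cb = 1).
        { destruct Hea as [[-> ->]|[-> ->]]; destruct Heb as [[-> ->]|[-> ->]]; try congruence.
          - split; [|split; [auto|lra]].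
            apply (mid_edge n (INR j + th) dl x y tau D D'); auto; unfold D1, D, D', t, u, u' in *; lra.
          - split; [|split; [apply adj_sym; auto|lra]].
            apply (mid_edge n (INR j + th) dl x y tau D' D); auto; unfold D1, D, D', t, u, u' in *; lra. }
        destruct Exy as [Mxy [Aab Cab]].
        assert (Hmid : (nd ea + nd eb + 1 <= 2 * n)%nat).
        { destruct Hea as [[-> _]|[-> _]]; destruct Heb as [[-> _]|[-> _]]; first [congruence | lia]. }
        apply (finish n dl g g' (la + S lb)).
        { apply gp_trans with ea; auto. econstructor; eauto. apply gp_sym; auto. }
        rewrite plus_INR, S_INR. lra.
    + destruct (Bb ea ca Hea) as [lb [Rb Lb]].
      apply (finish n dl g g' (la + lb)); [apply gp_trans with ea; auto; apply gp_sym; auto|].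
      rewrite plus_INR. lra.
    + destruct (Ba eb cb Heb) as [la [Ra La]].
      apply (finish n dl g g' (la + lb)); [apply gp_trans with eb; auto; apply gp_sym; auto|].
      rewrite plus_INR. lra.
    + exfalso. destruct Ma as [[Ex Ey]|[Ex Ey]]; destruct Mb as [[Ex' Ey']|[Ex' Ey']];
      first [apply Npp; congruence
            | assert (E : p = q') by congruence; rewrite E in Hp; lia
            | assert (E : q = p') by congruence; rewrite E in Lq; lia].
Qed.
End S2.

Theorem theorem2p1 (G : Group) (gens : list G) (delta : R) :
  generates gens -> 0 <= delta -> has_L gens delta ->
  forall (n : nat) (g g' : G),
    pdist gens (vertex G (gone G)) (vertex G g) = INR n ->
    pdist gens (vertex G (gone G)) (vertex G g') = INR n ->
    pdist gens (vertex G g) (vertex G g') <= 2 ->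
    exists l : list G,
      edge_path gens (g :: l) /\
      last (g :: l) g = g' /\
      INR (length l) <= 3 * delta + 2 /\
      edges_in_ball gens n (g :: l).
Proof.
  intros Hgen Hd HL. exact (main_sec G gens Hgen delta Hd HL).
Qed.
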